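(* Let $G$ be a connected simple graph without bridges whose edge set is identified with $[d+1]$, let $B_1,\dots,B_n$ be the bases (spanning trees) of its graphic matroid, all of cardinality $k$, and let $P=\operatorname{tconv}(V)$ with $V=(-e_{B_1},\dots,-e_{B_n})$. Then the cornered hull of $P$ is the tropical standard simplex $\Delta^d=\operatorname{tconv}\{-e_1,\dots,-e_{d+1}\}$, and the $i$-th corner of $P$ is $c_i(V)=e_i$ (as a point of $\mathbb{T}^d$). Moreover $\operatorname{type}_V(e_i)=(T_1,\dots,T_{d+1})$ with $$T_j=\begin{cases}[n] & \text{if } j=i,\\ \{l\in[n]: j\in B_l \text{ and } i\notin B_l\} & \text{otherwise.}\end{cases}$$
   Context: Tropical arithmetic is min-plus: $a\oplus b=\min(a,b)$, $a\odot b=a+b$; $\mathbb{T}^d=\mathbb{R}^{d+1}/\mathbb{R}(1,\dots,1)$; $\operatorname{tconv}\{v_1,\dots,v_n\}=\{\bigoplus_l\lambda_l\odot v_l:\lambda_l\in\mathbb{R}\}$; $e_B=\sum_{i\in B}e_i$. For $m\in[d+1]$ let $\bar S_m=\{\xi\in\mathbb{T}^d:\xi_m=\min_i\xi_i\}$. The $m$-th corner of $\operatorname{tconv}(v_1,\dots,v_n)$ is $c_m(V)=\bigoplus_l(-v_{l,m})\odot v_l$, the $m$-th cornered halfspace is $c_m(V)+\bar S_m$, and the cornered hull is the intersection of all $d+1$ cornered halfspaces. For $V=(v_1,\dots,v_n)$ and $x\in\mathbb{T}^d$, $\operatorname{type}_V(x)=(T_1,\dots,T_{d+1})$ with $T_m=\{l\in[n]:v_l\in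 x+\bar S_m\}$. *)

(* Defs.v *)
From mathcomp Require Import all_boot all_order all_algebra.
Set Implicit Arguments. Unset Strict Implicit. Unset Printing Implicit Defensive.
Import Order.TTheory GRing.Theory Num.Theory.
Local Open Scope ring_scope.

(* A graph on the finite vertex type V whose edge set is identified with
   [d+1] = 'I_(d.+1); [ends e] is the set of endpoints of edge e. *)

Definition simple_graph (V : finType) (d : nat) (ends : 'I_d.+1 -> {set V}) :=
  (forall e, #|ends e| = 2%N) /\ injective ends.

Definition adjE (V : finType) (d : nat) (ends : 'I_d.+1 -> {set V})
    (E : {set 'I_d.+1}) : rel V :=
  fun u v => [exists e in E, (u \in ends e) && (v \in ends e) && (u != v)].

Definition connectedE (V : finType) (d : nat) (ends : 'I_d.+1 -> {set V})
    (E : {set 'I_d.+1}) :=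
  forall u v : V, connect (adjE ends E) u v.

Definition connected_graph (V : finType) (d : nat) (ends : 'I_d.+1 -> {set V}) :=
  connectedE ends setT.

Definition is_bridge (V : finType) (d : nat) (ends : 'I_d.+1 -> {set V})
    (e : 'I_d.+1) := ~ connectedE ends (setT :\ e).

Definition bridgeless (V : finType) (d : nat) (ends : 'I_d.+1 -> {set V}) :=
  forall e, ~ is_bridge ends e.

Definition acyclicE (V : finType) (d : nat) (ends : 'I_d.+1 -> {set V})
    (E : {set 'I_d.+1}) :=
  forall e, e \in E -> forall u v, u \in ends e -> v \in ends e -> u != v ->
    ~~ connect (adjE ends (E :\ e)) u v.

(* spanning tree = basis of the graphic matroid of a connected graph *)
Definition spanning_tree (V : finType) (d : nat) (ends : 'I_d.+1 -> {set V})
    (E : {set 'I_d.+1}) :=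
  connectedE ends E /\ acyclicE ends E.

(* Points of T^d are represented by vectors 'I_(d.+1) -> R; two
   representatives are equal in T^d iff they differ by a constant. *)

Definition teq (R : realFieldType) (d : nat) (x y : 'I_d.+1 -> R) :=
  exists c : R, forall i, x i = y i + c.

(* minimum of a finite sequence (0 for the empty one, never used) *)
Definition minseq (R : realFieldType) (s : seq R) : R :=
  if s is a :: s' then foldr Num.min a s' else 0.

Definition tsum (R : realFieldType) (n : nat) (f : 'I_n -> R) : R :=
  minseq [seq f l | l <- enum 'I_n].

Definition tcomb (R : realFieldType) (d n : nat) (lam : 'I_n -> R)
    (v : 'I_n -> 'I_d.+1 -> R) : 'I_d.+1 -> R :=
  fun i => tsum (fun l => lam l + v l i).

Definition tconv (R : realFieldType) (d n : nat) (v : 'I_n -> 'I_d.+1 -> R)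
    (x : 'I_d.+1 -> R) :=
  exists lam : 'I_n -> R, teq x (tcomb lam v).

Definition inSbar (R : realFieldType) (d : nat) (m : 'I_d.+1)
    (xi : 'I_d.+1 -> R) := forall i, xi m <= xi i.

Definition in_shifted_Sbar (R : realFieldType) (d : nat) (x : 'I_d.+1 -> R)
    (m : 'I_d.+1) (y : 'I_d.+1 -> R) := inSbar m (fun i => y i - x i).

Definition corner (R : realFieldType) (d n : nat) (v : 'I_n -> 'I_d.+1 -> R)
    (m : 'I_d.+1) : 'I_d.+1 -> R :=
  tcomb (fun l => - v l m) v.

Definition cornered_hull (R : realFieldType) (d n : nat)
    (v : 'I_n -> 'I_d.+1 -> R) (x : 'I_d.+1 -> R) :=
  forall m, in_shifted_Sbar (corner v m) m x.

Definition ttype (R : realFieldType) (d n : nat) (v : 'I_n -> 'I_d.+1 -> R)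
    (x : 'I_d.+1 -> R) : 'I_d.+1 -> 'I_n -> Prop :=
  fun m l => in_shifted_Sbar x m (v l).
(* ttype v x m l  <->  l \in T_m *)

Definition eB (R : realFieldType) (d : nat) (B : {set 'I_d.+1}) : 'I_d.+1 -> R :=
  fun i => if i \in B then 1 else 0.

Definition unitv (R : realFieldType) (d : nat) (i : 'I_d.+1) : 'I_d.+1 -> R :=
  eB R [set i].

(* Main.v *)
Require Import Defs.
From mathcomp Require Import all_boot all_order all_algebra.
From Stdlib Require Import Classical.
From mathcomp Require Import lra.
Set Implicit Arguments. Unset Strict Implicit. Unset Printing Implicit Defensive.
Import Order.TTheory GRing.Theory Num.Theory.

Lemma adjE_sym (V : finType) d (ends : 'I_d.+1 -> {set V}) E :
  symmetric (adjE ends E).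
Proof.
move=> x y; apply/existsP/existsP => -[e /andP[HE /andP[/andP[Ha Hb] Hc]]];
  exists e; by rewrite HE Ha Hb eq_sym Hc.
Qed.

Lemma adjE_mono (V : finType) d (ends : 'I_d.+1 -> {set V}) (E1 E2 : {set 'I_d.+1}) x y :
  E1 \subset E2 -> adjE ends E1 x y -> adjE ends E2 x y.
Proof.
move=> S /existsP[e /andP[HE H]]; apply/existsP; exists e.
by rewrite (subsetP S _ HE) H.
Qed.

Lemma connect_mono (V : finType) d (ends : 'I_d.+1 -> {set V}) (E1 E2 : {set 'I_d.+1}) x y :
  E1 \subset E2 -> connect (adjE ends E1) x y -> connect (adjE ends E2) x y.
Proof.
move=> S; apply: connect_sub => a b H; apply: connect1; exact: adjE_mono H.
Qed.

Lemma two_ends (V : finType) (S : {set V}) a b x y :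
  #|S| = 2 -> a \in S -> b \in S -> a != b -> x \in S -> y \in S -> x != y ->
  (x == a) && (y == b) || (x == b) && (y == a).
Proof.
move/eqP/cards2P => [p [q [Hpq ->]]].
rewrite !inE => /orP[]/eqP-> /orP[]/eqP-> //; rewrite ?eqxx //= => _;
  (move=> /orP[]/eqP-> /orP[]/eqP->; rewrite ?eqxx ?(eq_sym q p) ?Hpq ?orbT //=).
Qed.

Lemma cycle_break (V : finType) d (ends : 'I_d.+1 -> {set V}) (F : {set 'I_d.+1}) f a b :
  #|ends f| = 2 -> a \in ends f -> b \in ends f -> a != b ->
  connect (adjE ends (F :\ f)) a b ->
  forall x y, connect (adjE ends F) x y -> connect (adjE ends (F :\ f)) x y.
Proof.
move=> H2 Ha Hb Hab Cab; apply: connect_sub => x y /existsP[e /andP[HE /andP[/andP[Hx Hy] Hxy]]].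
case: (eqVneq e f) => [Eef|Nef].
  subst e; case/orP: (two_ends H2 Ha Hb Hab Hx Hy Hxy) => /andP[/eqP-> /eqP->] //.
  by by rewrite sym_connect_sym //; apply: adjE_sym.
apply: connect1; apply/existsP; exists e; by rewrite !inE Nef HE Hx Hy Hxy.
Qed.

Lemma find_g (V : finType) d (ends : 'I_d.+1 -> {set V}) (F : {set 'I_d.+1}) i u v :
  (forall e, #|ends e| = 2) -> i \in F -> u \in ends i -> v \in ends i ->
  u != v -> connect (adjE ends (F :\ i)) u v ->
  exists g, [/\ g \in F, g != i &
    exists a b, [/\ a \in ends g, b \in ends g, a != b &
                   connect (adjE ends (F :\ g)) a b]].
Proof.
move=> H2 Hi Hu Hv Huv /connectP[p Hp Hl].
case: (shortenP Hp) Hl => p' Hp' Hun _ Hl.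
case: p' Hp' Hun Hl => [/= _ _ Hl|w rest]; first by rewrite Hl eqxx in Huv.
rewrite /= => /andP[/existsP[g /andP[HgE /andP[/andP[Hug Hwg] Huw]]] Hpath].
rewrite inE negb_or => /andP[/andP[Huw' Hur] _] Hl.
move: HgE; rewrite !inE => /andP[Hgi HgF].
exists g; split => //; exists u, w; split => //.
have Hpath' : path (adjE ends (F :\ g)) w rest.
  apply: (sub_in_path (P := predC1 u)); last exact: Hpath.
    move=> x y; rewrite !inE => Hxu Hyu /existsP[e /andP[HE /andP[/andP[Hx Hy] Hxy]]].
    case: (eqVneq e g) => [Eeg|Neg].
      subst e; case/orP: (two_ends (H2 g) Hug Hwg Huw Hx Hy Hxy) => /andP[/eqP Ex /eqP Ey].
        by rewrite Ex eqxx in Hxu.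
      by rewrite Ey eqxx in Hyu.
    apply/existsP; exists e; move: HE; rewrite !inE => /andP[_ ->].
    by rewrite Neg Hx Hy Hxy.
  rewrite /= eq_sym Huw /=; apply/allP => z Hz /=.
  by apply/negP => /eqP Ez; rewrite -Ez Hz in Hur.
have Cwv : connect (adjE ends (F :\ g)) w v by apply/connectP; exists rest.
rewrite sym_connect_sym; last exact: adjE_sym.
apply: connect_trans Cwv _; apply: connect1; apply/existsP; exists i.
by rewrite !inE eq_sym Hgi Hi Hv Hu eq_sym Huv.
Qed.

Lemma tree_exists (V : finType) d (ends : 'I_d.+1 -> {set V}) (E : {set 'I_d.+1}) i :
  (forall e, #|ends e| = 2) -> connectedE ends E -> i \in E ->
  exists F : {set 'I_d.+1}, [/\ F \subset E, i \in F & spanning_tree ends F].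
Proof.
move=> H2 CE iE.
pose P (F : {set 'I_d.+1}) := [&& F \subset E, i \in F &
   [forall u, forall v, connect (adjE ends F) u v]].
have PE : P E.
  by rewrite /P subxx iE /=; apply/forallP => u; apply/forallP => v; apply: CE.
case: (arg_minnP (fun F : {set 'I_d.+1} => #|F|) PE) => F /and3P[FsE iF /forallP Fc] Fmin.
have FC : connectedE ends F by move=> u v; exact: (forallP (Fc u) v).
exists F; split => //; split => // f Hf u v Hu Hv Huv; apply/negP => C.
have [g [gF gi [a [b [Ha Hb Hab Cab]]]]] : exists g, [/\ g \in F, g != i &
    exists a b, [/\ a \in ends g, b \in ends g, a != b &
                   connect (adjE ends (F :\ g)) a b]].
  case: (eqVneq f i) => [Efi|Nfi].
    subst f; exact: find_g H2 Hf Hu Hv Huv C.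
  by exists f; split => //; exists u, v; split.
have PQ : P (F :\ g).
  rewrite /P !inE eq_sym gi iF /= (subset_trans (subD1set F g) FsE) /=.
  apply/forallP => x; apply/forallP => y.
  exact: (cycle_break (H2 g) Ha Hb Hab Cab (FC x y)).
have := Fmin _ PQ; rewrite (cardsD1 g F) gF.
by rewrite add1n ltnn.
Qed.

Local Open Scope ring_scope.

Lemma minseq_spec (R : realFieldType) (a : R) s :
  (forall x, x \in a :: s -> minseq (a :: s) <= x) /\ minseq (a :: s) \in a :: s.
Proof.
rewrite /=; elim: s => [|b s [IH1 IH2]] /=.
  by split; [move=> x; rewrite inE => /eqP->|rewrite inE].
split.
  move=> x; rewrite !inE => /or3P[/eqP->|/eqP->|Hx].
  - rewrite ge_min; apply/orP; right; apply: IH1; exact: mem_head.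
  - by rewrite ge_min lexx.
  - rewrite ge_min; apply/orP; right; apply: IH1; by rewrite inE Hx orbT.
rewrite /Num.min; case: ifP => _; first by rewrite !inE eqxx orbT.
move: IH2; rewrite !inE => /orP[->|->]; by rewrite ?orbT.
Qed.

Lemma tsum_le (R : realFieldType) n (f : 'I_n -> R) l : tsum f <= f l.
Proof.
rewrite /tsum; have : f l \in [seq f l | l <- enum 'I_n].
  by apply: map_f; rewrite mem_enum.
case: [seq _ | _ <- _] => [//|a s Hin].
by case: (minseq_spec a s) => H _; apply: H.
Qed.

Lemma tsum_ex (R : realFieldType) n (f : 'I_n -> R) (l0 : 'I_n) :
  exists l, tsum f = f l.
Proof.
rewrite /tsum; have : f l0 \in [seq f l | l <- enum 'I_n].
  by apply: map_f; rewrite mem_enum.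
move=> Hin; case E: [seq _ | _ <- _] Hin => [|a s] Hin; first by rewrite in_nil in Hin.
case: (minseq_spec a s) => _; rewrite -E => /mapP[l _ ->]; by exists l.
Qed.

Lemma tsum_eq (R : realFieldType) n (f : 'I_n -> R) c :
  (forall l, c <= f l) -> (exists l, f l = c) -> tsum f = c.
Proof.
move=> H [l0 Hl0]; case: (tsum_ex f l0) => l El.
apply/eqP; rewrite eq_le; apply/andP; split.
  by rewrite -Hl0 tsum_le.
by rewrite El H.
Qed.

Lemma tsum0 (R : realFieldType) n (f : 'I_n -> R) :
  (forall l, f l = 0) -> tsum f = 0.
Proof.
move=> H; rewrite /tsum; case: (enum 'I_n) => [//|a s] /=.
rewrite H; elim: s => [//|b s IH] /=; by rewrite IH H /Num.min ltxx.
Qed.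

Theorem mainTheorem6 (R : realFieldType) (Vt : finType) (d : nat)
    (ends : 'I_d.+1 -> {set Vt}) (n k : nat) (B : 'I_n -> {set 'I_d.+1}) :
  simple_graph ends -> connected_graph ends -> bridgeless ends ->
  injective B ->
  (forall E, spanning_tree ends E <-> exists l, B l = E) ->
  (forall l, #|B l| = k) ->
  let v : 'I_n -> 'I_d.+1 -> R := fun l i => - eB R (B l) i in
  (forall x, cornered_hull v x <-> tconv (fun i : 'I_d.+1 => fun j => - unitv R i j) x)
  /\ (forall i, teq (corner v i) (unitv R i))
  /\ (forall i j l, ttype v (unitv R i) j l <->
        (if j == i then True
         else (j \in B l) && (i \notin B l))).
Proof.
move=> [H2 _] _ Hbr _ Htree _ v.
have exl : forall i m, i != m -> exists l, (i \in B l) && (m \notin B l).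
  move=> i m Nim.
  have C0 : connectedE ends (setT :\ m) by apply: NNPP; apply: Hbr.
  have iE : i \in setT :\ m by rewrite !inE Nim.
  case: (tree_exists H2 C0 iE) => F [FsE iF /Htree [l El]].
  exists l; rewrite El iF /=; apply/negP => mF.
  by move: (subsetP FsE _ mF); rewrite !inE eqxx.
have cval : forall m i, corner v m i = if i == m then 0 else -1.
  move=> m i; rewrite /corner /tcomb /v; case: (eqVneq i m) => [->|Nim].
    by apply: tsum0 => l; rewrite opprK addrN.
  apply: tsum_eq.
    by move=> l; rewrite opprK /eB; case: (m \in B l); case: (i \in B l); lra.
  case: (exl i m Nim) => l /andP[iB mB]; exists l.
  by rewrite opprK /eB iB (negbTE mB); lra.
split.
  move=> x; split.
    move=> Hx; exists (fun l => x l + 1), 0 => j; rewrite addr0 /tcomb.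
    symmetry; apply: tsum_eq.
      move=> l; rewrite /unitv /eB inE; case: (eqVneq j l) => [->|Njl].
        lra.
      have := Hx j l; rewrite /in_shifted_Sbar /inSbar /= !cval eqxx.
      rewrite eq_sym (negbTE Njl); lra.
    by exists j; rewrite /unitv /eB inE eqxx; lra.
  move=> [lam [c Hx]] m i; rewrite /in_shifted_Sbar /inSbar /= !cval eqxx.
  case: (eqVneq i m) => [->|Nim]; first by rewrite lexx.
  rewrite !Hx /tcomb; case: (tsum_ex (fun l => lam l + - unitv R l i) i) => l ->.
  have := tsum_le (fun l => lam l + - unitv R l m) l.
  rewrite /unitv /eB !inE; case: (m == l); case: (i == l); lra.
split.
  move=> i; exists (-1) => j; rewrite cval /unitv /eB inE.
  by case: (j == i); lra.
move=> i j l; rewrite /ttype /in_shifted_Sbar /inSbar /v /unitv /eB.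
case: (eqVneq j i) => [->|Nji].
  split => // _ kk; rewrite !inE eqxx.
  case: (eqVneq kk i) => [->|Nki]; first by rewrite lexx.
  case: (i \in B l); case: (kk \in B l); lra.
split.
  move=> H; have := H i; rewrite !inE eqxx (negbTE Nji).
  by case: (j \in B l); case: (i \in B l); lra.
move=> /andP[jB iB] kk; rewrite !inE (negbTE Nji) jB.
case: (eqVneq kk i) => [->|Nki]; first by rewrite (negbTE iB); lra.
move: Nki; rewrite -(inj_eq val_inj) /=; case: (kk \in B l); case: (_ == _) => // _; lra.
Qed.
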